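(* Let $c>1$, let $m=m_1\cdots m_c\in S_c$, and let $K$ be the set partition of $S_c$ whose only part with more than one element is the set of cyclic shifts $\{m_am_{a+1}\cdots m_cm_1\cdots m_{a-1}:1\le a\le c\}$. Let $p=1\rightharpoonup m$ and $q=2\rightharpoonup m$, both in $S_{c+1}$. Then every non-avoider in $S_{c+1}$ is $K$-equivalent to $p$ or to $q$.
   Context: Permutations are written in one-line notation as words. For a word $w$ and positive integer $i$, $i\rightharpoonup w$ is the word obtained by increasing by $1$ each letter of $w$ that is $\ge i$ and then prepending $i$. The order permutation (standardization) of a word $u$ of distinct positive integers of length $\ell$ is the unique $\pi\in S_\ell$ with $\pi_i<\pi_j$ iff $u_i<u_j$. The $K$-equivalence on $S_n$ is generated by declaring $\phi\equiv\psi$ whenever $\phi=aub$, $\psi=avb$ for words $a,b,u,v$ with $u,v$ of length $c$ whose order permutations lie in the same part of $K$. A hit is a contiguous subword of length $c$ whose order permutation is a cyclic shift of $m$; a non-avoider is a permutation containing a hit. *)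

(* Defs.v *)
(* Permutations are words (seq nat) in one-line notation. *)
From Stdlib Require Export Relations.Relation_Operators.
From mathcomp Require Import all_boot.
Set Implicit Arguments. Unset Strict Implicit. Unset Printing Implicit Defensive.

Definition is_perm (n : nat) (w : seq nat) : Prop := perm_eq w (iota 1 n).

(* i ⇀ w : increase each letter >= i by one, then prepend i *)
Definition prepend (i : nat) (w : seq nat) : seq nat :=
  i :: [seq (if i <= x then x.+1 else x) | x <- w].

Definition std (u : seq nat) : seq nat :=
  [seq (count (fun y => y < x) u).+1 | x <- u].

Definition is_cshift (m w : seq nat) : Prop :=
  exists2 a, a < size m & w = rot a m.

(* u and v (elements of S_c) lie in the same part of K: equal, or both
   cyclic shifts of m *)
Definition sameK (m u v : seq nat) : Prop :=
  u = v \/ (is_cshift m u /\ is_cshift m v).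

Definition Kstep (m : seq nat) (n : nat) (phi psi : seq nat) : Prop :=
  is_perm n phi /\ is_perm n psi /\
  exists a b u v : seq nat,
    [/\ phi = a ++ u ++ b, psi = a ++ v ++ b,
        size u = size m, size v = size m & sameK m (std u) (std v)].

Definition Kequiv (m : seq nat) (n : nat) : seq nat -> seq nat -> Prop :=
  clos_refl_sym_trans (seq nat) (Kstep m n).

Definition nonavoider (m phi : seq nat) : Prop :=
  exists a u b : seq nat,
    [/\ phi = a ++ u ++ b, size u = size m & is_cshift m (std u)].

(* Main.v *)
Require Import Defs.
From mathcomp Require Import all_boot.
From mathcomp Require Import zify.

Definition gg (i x : nat) := if i <= x then x.+1 else x.

Lemma prependE i w : prepend i w = i :: map (gg i) w.
Proof. by []. Qed.

Lemma gg_lt i x y : (gg i x < gg i y) = (x < y).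
Proof. rewrite /gg; case: ifP; case: ifP; lia. Qed.

Lemma gg_inj i : injective (gg i).
Proof. move=> x y; rewrite /gg; case: ifP; case: ifP; lia. Qed.

Lemma count_lt_iota x n a :
  count (fun y => y < x) (iota a n) = minn n (x - a).
Proof.
elim: n a => [|n IH] a /=; first by lia.
rewrite IH; case: (ltnP a x) => H /=; lia.
Qed.

Lemma std_perm c s : is_perm c s -> std s = s.
Proof.
move=> P; rewrite /std; apply: map_id_in => x xs.
have := perm_mem P x; rewrite xs mem_iota => /esym/andP[h1 h2].
have -> : count (fun y => y < x) s = count (fun y => y < x) (iota 1 c).
  by move/permP: P => ->.
rewrite count_lt_iota; lia.
Qed.

Lemma std_map i s : std (map (gg i) s) = std s.
Proof.
rewrite /std -map_comp; apply: eq_map => x /=; rewrite count_map.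
congr S; apply: eq_count => y /=; exact: gg_lt.
Qed.

Lemma prepend_perm c s y : is_perm c s -> 1 <= y <= c.+1 ->
  is_perm c.+1 (prepend y s).
Proof.
move=> P Hy; rewrite prependE /is_perm; apply: uniq_perm.
- rewrite /= map_inj_uniq; last exact: gg_inj.
  rewrite (perm_uniq P) iota_uniq andbT; apply/mapP => -[j _]; rewrite /gg.
  case: ifP; lia.
- exact: iota_uniq.
move=> x; rewrite in_cons mem_iota; apply/idP/idP.
- case/orP; first by move/eqP->; lia.
  case/mapP=> j js ->; have := perm_mem P j; rewrite js mem_iota.
  rewrite /gg; case: ifP; lia.
- move=> Hx; case: (eqVneq x y) => [->//|nxy]; apply/orP; right; apply/mapP.
  exists (if x < y then x else x.-1).
    rewrite (perm_mem P) mem_iota; case: ifP; lia.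
  rewrite /gg; case: ifP; case: ifP; lia.
Qed.

Lemma cshift_perm c m s : size m = c -> is_perm c m -> is_cshift m s -> is_perm c s.
Proof. move=> _ P [a _ ->]; rewrite /is_perm perm_rot; exact: P. Qed.

Lemma cshift_rot1 m s : 0 < size m -> is_cshift m s -> is_cshift m (rot 1 s).
Proof.
move=> Hm [a Ha ->]; rewrite rot_add_mod; try lia.
case: ifP => H.
  case: (ltnP (1 + a) (size m)) => H2; first by exists (1 + a).
  have -> : 1 + a = size m by lia.
  by rewrite rot_size; exists 0 => //; rewrite rot0.
exists (1 + a - size m) => //; lia.
Qed.

Lemma gen_step m n a u v b :
  is_perm n (a ++ u ++ b) -> is_perm n (a ++ v ++ b) ->
  size u = size m -> size v = size m ->
  is_cshift m (std u) -> is_cshift m (std v) ->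
  Kequiv m n (a ++ u ++ b) (a ++ v ++ b).
Proof.
move=> P1 P2 s1 s2 c1 c2; apply: rst_step; split=> //; split=> //.
by exists a, b, u, v; split=> //; right.
Qed.

Arguments cshift_perm {c m s}.
Arguments std_perm {c s}.
Arguments prepend_perm {c s y}.

Lemma gg_swap k j y z : (y = k /\ z = k.+1) \/ (y = k.+1 /\ z = k) ->
  [/\ gg z k = y, gg y k = z & (j != k -> gg y j = gg z j)].
Proof. rewrite /gg => -[[-> ->]|[-> ->]]; split; try (case: ifP; lia); move/eqP=> H; case: ifP; case: ifP; lia. Qed.

Lemma YZ c m k y z s' : size m = c -> is_perm c m -> 
  1 <= k <= c -> (y = k /\ z = k.+1) \/ (y = k.+1 /\ z = k) ->
  is_cshift m s' ->
  Kequiv m c.+1 (prepend y m) (map (gg z) s' ++ [:: z]).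
Proof.
move=> Sm Pm Hk Hyz Cs.
have km : k \in m by rewrite (perm_mem Pm) mem_iota; lia.
set b := index k m.
have bm : b < size m by rewrite index_mem.
have [t rE] : exists t, rot b m = k :: t.
  exists (drop b.+1 m ++ take b m).
  by rewrite /rot (drop_nth 0 bm) nth_index.
have Um : uniq m by rewrite (perm_uniq Pm) iota_uniq.
have kt : k \notin t.
  by have := rot_uniq b m; rewrite rE Um /= => /andP[].
have Cr : is_cshift m (rot b m) by exists b.
have Cr1 : is_cshift m (t ++ [:: k]).
  by rewrite cats1 -rot1_cons -rE; apply: cshift_rot1 => //; lia.
have WE : prepend y (t ++ [:: k]) = map (gg z) (rot b m) ++ [:: z].
  rewrite prependE rE map_cat /=.
  have [f1 f2 _] := gg_swap k k y z Hyz; rewrite f1 f2; congr (_ :: _ ++ _).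
  apply/eq_in_map => j jt; have [_ _ ->] // := gg_swap k j y z Hyz.
  by apply: contraNneq kt => <-.
have Hy : 1 <= y <= c.+1 by lia.
have Hz : 1 <= z <= c.+1 by lia.
have Pr := cshift_perm Sm Pm Cr.
have Ps' := cshift_perm Sm Pm Cs.
have Pt := cshift_perm Sm Pm Cr1.
have Pz : forall s, is_perm c s -> is_perm c.+1 (map (gg z) s ++ [:: z]).
  move=> s Ps; rewrite /is_perm cats1 perm_rcons; exact: prepend_perm.
apply: (rst_trans _ _ _ (prepend y (t ++ [:: k]))).
  have := @gen_step m c.+1 [:: y] (map (gg y) m) (map (gg y) (t ++ [:: k])) [::].
  rewrite !cats0; apply.
  - exact: prepend_perm.
  - exact: prepend_perm.
  - by rewrite size_map.
  - by rewrite size_map (perm_size Pt) (perm_size Pm).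
  - by rewrite std_map (std_perm Pm); exists 0; rewrite ?rot0 //; lia.
  - by rewrite std_map (std_perm Pt).
rewrite WE.
have := @gen_step m c.+1 [::] (map (gg z) (rot b m)) (map (gg z) s') [:: z].
apply.
- exact: Pz.
- exact: Pz.
- by rewrite size_map size_rot.
- by rewrite size_map (perm_size Ps') (perm_size Pm).
- by rewrite std_map (std_perm Pr).
- by rewrite std_map (std_perm Ps').
Qed.

Lemma Y2 c m y : size m = c -> is_perm c m -> 1 <= y -> y.+2 <= c.+1 ->
  Kequiv m c.+1 (prepend y m) (prepend y.+2 m).
Proof.
move=> Sm Pm H1 H2.
have Cm : is_cshift m m by exists 0; rewrite ?rot0 //; lia.
apply: (rst_trans _ _ _ (map (gg y.+1) m ++ [:: y.+1])).
  apply: (@YZ c m y y y.+1 m) => //; first lia; by left.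
apply: rst_sym; apply: (@YZ c m y.+1 y.+2 y.+1 m) => //; first lia; by right.
Qed.

Lemma parity c m y : size m = c -> is_perm c m -> 1 <= y <= c.+1 ->
  Kequiv m c.+1 (prepend y m) (prepend 1 m) \/
  Kequiv m c.+1 (prepend y m) (prepend 2 m).
Proof.
move=> Sm Pm; elim: y {-2}y (leqnn y) => [|n IH] y Hyn Hy; first lia.
case: (ltnP y 3) => H3.
  have : y = 1 \/ y = 2 by lia.
  by case=> ->; [left|right]; apply: rst_refl.
have [H|H] := IH (y - 2) ltac:(lia) ltac:(lia).
- left; apply: (rst_trans _ _ _ (prepend (y - 2) m)) => //.
  apply: rst_sym; have -> : y = (y - 2).+2 by lia.
  have -> : (y - 2).+2 - 2 = y - 2 by lia.
  apply: Y2 => //; lia.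
- right; apply: (rst_trans _ _ _ (prepend (y - 2) m)) => //.
  apply: rst_sym; have -> : y = (y - 2).+2 by lia.
  have -> : (y - 2).+2 - 2 = y - 2 by lia.
  apply: Y2 => //; lia.
Qed.

Theorem lemma2p5 (c : nat) (m : seq nat) :
  1 < c -> size m = c -> is_perm c m ->
  forall phi : seq nat, is_perm c.+1 phi -> nonavoider m phi ->
    Kequiv m c.+1 phi (prepend 1 m) \/ Kequiv m c.+1 phi (prepend 2 m).
Proof.
move=> Hc Sm Pm phi Pphi [a [u [b [E Su Cu]]]].
have Sphi : size phi = c.+1 by rewrite (perm_size Pphi) size_iota.
have Cm : is_cshift m m by exists 0; rewrite ?rot0 //; lia.
have Pu := cshift_perm Sm Pm Cu.
have memphi : forall x, x \in phi -> 1 <= x <= c.+1.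
  by move=> x; rewrite (perm_mem Pphi) mem_iota; lia.
have Hab : size a + size b = 1 by move: Sphi; rewrite E !size_cat; lia.
suff [y [Hy K]] : exists y, 1 <= y <= c.+1 /\ Kequiv m c.+1 phi (prepend y m).
  have [K'|K'] := @parity c m y Sm Pm Hy; [left|right]; exact: rst_trans K K'.
have [[Ea [z Eb]]|[[y Ea] Eb]] : (a = [::] /\ exists z, b = [:: z]) \/ ((exists y, a = [:: y]) /\ b = [::]).
  case: a Hab E => [|y [|? ?]] //=; case: b => [|z [|? ?]] //= *; try lia.
  - by left; split=> //; exists z.
  - by right; split=> //; exists y.
- rewrite Ea Eb /= in E.
  have Hz : 1 <= z <= c.+1 by apply: memphi; rewrite E mem_cat mem_seq1 eqxx orbT.
  have [k [Hk Hyz]] : exists k, 1 <= k <= c /\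
     ((k = k /\ z = k.+1) \/ (k.+1 = k.+1 /\ z = k)).
    case: (ltnP 1 z) => H; first by exists z.-1; split; [lia | left; split; lia].
    by exists 1; split; [lia | right; split; lia].
  have [y Hyz'] : exists y, (y = k /\ z = k.+1) \/ (y = k.+1 /\ z = k).
    by case: Hyz => -[_ ->]; [exists k; left | exists k.+1; right].
  exists y; split; first by lia.
  apply: (rst_trans _ _ _ (map (gg z) (std u) ++ [:: z])).
    rewrite E /=; have := @gen_step m c.+1 [::] u (map (gg z) (std u)) [:: z].
    apply => //.
    + by rewrite -E.
    + by rewrite /is_perm cats1 perm_rcons; apply: prepend_perm.
    + by rewrite size_map /std size_map.
    + by rewrite std_map (std_perm Pu).
  apply: rst_sym; exact: (@YZ c m k y z (std u)).
- rewrite Ea Eb /= cats0 in E.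
  have Hy : 1 <= y <= c.+1 by apply: memphi; rewrite E in_cons eqxx.
  exists y; split => //.
  have := @gen_step m c.+1 [:: y] u (map (gg y) m) [::]; rewrite /= !cats0 -E.
  apply => //.
  + exact: prepend_perm.
  + by rewrite size_map.
  + by rewrite std_map (std_perm Pm).
Qed.
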